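(* For $n\geq 3$ and $l\in\mathbb{N}$ let $Q^n_l=\operatorname{conv}\{\,l C_{n-1}\times\{0\},\ \pm e_n\}\subset\mathbb{R}^n$, where $C_{n-1}=[-1,1]^{n-1}$ and $e_n$ is the $n$th standard unit vector. Then for every constant $c$ there exists $l\in\mathbb{N}$ such that $\mathrm{g}_{n-2}(Q^n_l)> c\,\sigma_{n-2}(Q^n_l)$. If $n\geq 4$, then likewise for every constant $c$ there exists $l\in\mathbb{N}$ such that $\mathrm{g}_{n-3}(Q^n_l)> c\,\sigma_{n-3}(Q^n_l)$.
   Context: For a lattice polytope $P\subset\mathbb{R}^n$ (all vertices in $\mathbb{Z}^n$) of dimension $n$, the function $k\mapsto \mathrm{G}(kP)=\#(kP\cap\mathbb{Z}^n)$, $k\in\mathbb{N}$, is a polynomial of degree $n$ (Ehrhart); write $\mathrm{G}(kP)=\sum_{i=0}^n \mathrm{g}_i(P)k^i$. For a $0$-symmetric convex body $K\subset\mathbb{R}^n$ (compact, convex, nonempty interior) and a lattice $\Lambda$, the successive minima are $\lambda_i(K,\Lambda)=\min\{\lambda>0:\dim(\lambda K\cap\Lambda)\geq i\}$, $1\le i\le n$, where $\dim$ is the dimension of the affine hull; $\lambda_i(K)=\lambda_i(K,\mathbb{Z}^n)$. For a polytope $P$, $DP=P-P$ and $\sigma_i(P)=\sigma_i\big(1/\lambda_1(DP),\dots,1/\lambda_n(DP)\big)$, where $\sigma_i(x_1,\dots,x_n)=\sum_{I\subseteq\{1,\dots,n\},\#I=i}\prod_{j\in I}x_j$ is the $i$th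 elementary symmetric polynomial. *)

(* Defs.v *)
From HB Require Import structures.
From mathcomp Require Import all_boot all_order all_algebra.
From mathcomp Require Import boolp classical_sets reals.

Set Implicit Arguments.
Unset Strict Implicit.
Unset Printing Implicit Defensive.

Import Order.TTheory GRing.Theory Num.Theory.
Local Open Scope ring_scope.
Local Open Scope classical_set_scope.

Definition vecR {R : realType} {n : nat} (z : 'rV[int]_n) : 'rV[R]_n :=
  map_mx (fun a : int => a%:~R) z.

Definition conv {R : realType} {n : nat} (S : set 'rV[R]_n) : set 'rV[R]_n :=
  [set x | exists (m : nat) (w : 'I_m -> R) (v : 'I_m -> 'rV[R]_n),
     (forall i, 0 <= w i) /\ \sum_(i < m) w i = 1 /\
     (forall i, S (v i)) /\ x = \sum_(i < m) w i *: v i].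

Definition dilate {R : realType} {n : nat} (t : R) (K : set 'rV[R]_n)
  : set 'rV[R]_n := [set t *: x | x in K].

Definition diffbody {R : realType} {n : nat} (K : set 'rV[R]_n)
  : set 'rV[R]_n := [set z | exists x y, K x /\ K y /\ z = x - y].

Definition lattice_count {R : realType} {n : nat} (K : set 'rV[R]_n)
  (N : nat) : Prop :=
  exists s : seq 'rV[int]_n,
    uniq s /\ (forall z, z \in s <-> K (vecR z)) /\ size s = N.

(* p is the Ehrhart polynomial of P:  G(kP) = p(k) for all k in N.
   (Such a polynomial is unique, as it is determined on infinitely many points.) *)
Definition is_ehrhart_poly {R : realType} {n : nat} (P : set 'rV[R]_n)
  (p : {poly R}) : Prop :=
  forall k : nat, exists N : nat,
    lattice_count (dilate k%:R P) N /\ p.[k%:R] = N%:R.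

(* dim aff(A ∩ Z^n) >= i : there are i+1 affinely independent lattice
   points in A. *)
Definition lattice_affdim_ge {R : realType} {n : nat} (A : set 'rV[R]_n)
  (i : nat) : Prop :=
  exists z : 'I_i.+1 -> 'rV[int]_n,
    (forall j, A (vecR (z j))) /\
    row_free (\matrix_(j < i) (vecR (z (lift ord0 j)) - vecR (z ord0)) : 'M[R]_(i, n)).

(* successive minimum lambda_i(K, Z^n) (the minimum is attained, so it
   equals the infimum). *)
Definition succ_min {R : realType} {n : nat} (K : set 'rV[R]_n) (i : nat) : R :=
  inf [set t : R | 0 < t /\ lattice_affdim_ge (dilate t K) i].

Definition esym {R : realType} {n : nat} (x : 'I_n -> R) (i : nat) : R :=
  \sum_(I : {set 'I_n} | #|I| == i) \prod_(j in I) x j.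

Definition sigma_poly {R : realType} {n : nat} (P : set 'rV[R]_n) (i : nat) : R :=
  esym (fun j : 'I_n => 1 / succ_min (diffbody P) (j.+1)) i.

(* e_n: last standard unit vector (coordinate index n-1 in 0-based indexing) *)
Definition e_last {R : realType} (n : nat) : 'rV[R]_n :=
  \row_(j < n) (if val j == n.-1 then 1 else 0).

Definition cube_times0 {R : realType} (n l : nat) : set 'rV[R]_n :=
  [set x | forall j : 'I_n,
     if val j == n.-1 then x 0 j = 0 else `|x 0 j| <= l%:R].

Definition Qnl {R : realType} (n l : nat) : set 'rV[R]_n :=
  conv (@cube_times0 R n l `|` [set @e_last R n; - @e_last R n]).
Arguments e_last {R} n.
Arguments cube_times0 {R} n l.
Arguments Qnl {R} n l.

(* Main.v *)
Require Import Defs.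
From HB Require Import structures.
From mathcomp Require Import all_boot all_order all_algebra.
From mathcomp Require Import boolp classical_sets reals.
From mathcomp Require Import ring lra zify.
Set Implicit Arguments.
Unset Strict Implicit.
Unset Printing Implicit Defensive.
Import Order.TTheory GRing.Theory Num.Theory.
Local Open Scope ring_scope.

Definition Fstep {R : numFieldType} (L : seq {poly R}) (i : nat) : {poly R} :=
  (i.+1%:R)^-1 *: ('X^(i.+1) - \sum_(r < i) 'C(i.+1, r)%:R *: L`_r).

Fixpoint Flist {R : numFieldType} (i : nat) : seq {poly R} :=
  match i with
  | 0 => [:: Fstep [::] 0]
  | i'.+1 => rcons (Flist i') (Fstep (Flist i') i)
  end.

Definition Fp {R : numFieldType} (i : nat) : {poly R} := (@Flist R i)`_i.

Lemma size_Flist (R : numFieldType) i : size (@Flist R i) = i.+1.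
Proof. by elim: i => [//|i IH] /=; rewrite size_rcons IH. Qed.

Lemma Flist_nth (R : numFieldType) i r : (r <= i)%N -> (@Flist R i)`_r = Fp r.
Proof.
elim: i r => [|i IH] r.
  by rewrite leqn0 => /eqP ->.
rewrite leq_eqVlt => /orP [/eqP -> //|hr].
by rewrite /= nth_rcons size_Flist hr IH.
Qed.

Lemma Fp_eq (R : numFieldType) i :
  @Fp R i = (i.+1%:R)^-1 *: ('X^(i.+1) - \sum_(r < i) 'C(i.+1, r)%:R *: Fp r).
Proof.
case: i => [|i]; first by rewrite /Fp /= /Fstep !big_ord0.
rewrite /Fp /= nth_rcons size_Flist ltnn eqxx /Fstep.
congr (_ *: (_ - _)); apply: eq_bigr => r _.
by rewrite Flist_nth // -ltnS.
Qed.

Lemma Fp_coef (R : numFieldType) i d :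
  (@Fp R i)`_d = (i.+1%:R)^-1 * ((d == i.+1)%:R - \sum_(r < i) 'C(i.+1, r)%:R * (Fp r)`_d).
Proof.
rewrite {1}Fp_eq coefZ coefB coefXn coef_sum; congr (_ * (_ - _)).
by apply: eq_bigr => r _; rewrite coefZ.
Qed.

Lemma Fp_coef_hi (R : numFieldType) i d : (i.+2 <= d)%N -> (@Fp R i)`_d = 0.
Proof.
elim/ltn_ind: i d => i IH d hd.
rewrite Fp_coef big1 ?subr0.
  have -> : (d == i.+1) = false by apply/negbTE; rewrite neq_ltn hd orbT.
  by rewrite mulr0.
move=> r _; rewrite (IH r (ltn_ord r)) ?mulr0 //.
by apply: leq_trans hd; rewrite !ltnS ltnW.
Qed.

Lemma pow_sum_rec (R : numFieldType) (i k : nat) :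
  i.+1%:R * (\sum_(j < k) (j%:R : R) ^+ i) =
  k%:R ^+ i.+1 - \sum_(r < i) 'C(i.+1, r)%:R * (\sum_(j < k) (j%:R : R) ^+ r).
Proof.
have tel : (k%:R : R) ^+ i.+1 = \sum_(j < k) ((j.+1%:R : R) ^+ i.+1 - j%:R ^+ i.+1).
  rewrite -(big_mkord xpredT (fun j => (j.+1%:R : R) ^+ i.+1 - j%:R ^+ i.+1)).
  by rewrite (telescope_sumr (fun j => (j%:R : R) ^+ i.+1)) // expr0n /= subr0.
have step : forall j : nat, (j.+1%:R : R) ^+ i.+1 - j%:R ^+ i.+1 =
   \sum_(r < i) 'C(i.+1, r)%:R * j%:R ^+ r + i.+1%:R * j%:R ^+ i.
  move=> j; rewrite -addn1 natrD exprD1n big_ord_recr big_ord_recr /=.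
  rewrite binn binSn mulr1n addrK; congr (_ + _).
    by apply: eq_bigr => r _; rewrite mulr_natl.
  by rewrite mulr_natl.
have tel2 : (k%:R : R) ^+ i.+1 = \sum_(j < k) (\sum_(r < i) 'C(i.+1, r)%:R * (j%:R : R) ^+ r + i.+1%:R * j%:R ^+ i).
  by rewrite tel; apply: eq_bigr => j _; exact: step.
rewrite tel2 big_split /= -mulr_sumr.
rewrite exchange_big /=.
have -> : \sum_(j < i) \sum_(i0 < k) 'C(i.+1, j)%:R * (i0%:R : R) ^+ j =
          \sum_(r < i) 'C(i.+1, r)%:R * (\sum_(j < k) (j%:R : R) ^+ r).
  by apply: eq_bigr => r _; rewrite mulr_sumr.
by rewrite addrC addrK.
Qed.

Lemma Fp_val (R : numFieldType) (i k : nat) :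
  (@Fp R i).[k%:R] = \sum_(j < k) (j%:R : R) ^+ i.
Proof.
elim/ltn_ind: i => i IH.
rewrite Fp_eq hornerZ hornerD hornerN hornerXn horner_sum.
have -> : \sum_(r < i) ('C(i.+1, r)%:R *: Fp r).[k%:R] =
          \sum_(r < i) 'C(i.+1, r)%:R * (\sum_(j < k) (j%:R : R) ^+ r).
  by apply: eq_bigr => r _; rewrite hornerZ IH.
rewrite -pow_sum_rec mulrA mulVf ?mul1r //.
by rewrite pnatr_eq0.
Qed.

Lemma binR2 (R : numFieldType) a : ('C(a.+2, 2)%:R : R) = a.+2%:R * a.+1%:R / 2.
Proof.
have h : ('C(a.+2, 2) * 2 = a.+2 * a.+1)%N.
  by have := bin_ffact a.+2 2; rewrite !ffactnS ffactn0 muln1.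
have h2 : (2%:R : R) != 0 by rewrite pnatr_eq0.
apply: (mulIf h2); move: h => /(congr1 (fun x => x%:R : R)); rewrite !natrM => ->; field; done.
Qed.

Lemma binR3 (R : numFieldType) a : ('C(a.+3, 3)%:R : R) = a.+3%:R * a.+2%:R * a.+1%:R / 6.
Proof.
have h : ('C(a.+3, 3) * 6 = a.+3 * a.+2 * a.+1)%N.
  by have := bin_ffact a.+3 3; rewrite !ffactnS ffactn0 muln1 mulnA.
have h2 : (6%:R : R) != 0 by rewrite pnatr_eq0.
apply: (mulIf h2); move: h => /(congr1 (fun x => x%:R : R)); rewrite !natrM => ->; field; done.
Qed.

Lemma binR4 (R : numFieldType) a : ('C(a.+4, 4)%:R : R) = a.+4%:R * a.+3%:R * a.+2%:R * a.+1%:R / 24.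
Proof.
have h : ('C(a.+4, 4) * 24 = a.+4 * a.+3 * a.+2 * a.+1)%N.
  by have := bin_ffact a.+4 4; rewrite !ffactnS ffactn0 muln1 !mulnA.
have h2 : (24%:R : R) != 0 by rewrite pnatr_eq0.
apply: (mulIf h2); move: h => /(congr1 (fun x => x%:R : R)); rewrite !natrM => ->; field; done.
Qed.

Lemma binsym (a b : nat) : 'C(a + b, a) = 'C(a + b, b).
Proof. by have := bin_sub (leq_addl a b); rewrite addnK. Qed.

Lemma binsym' a b c : c = (a + b)%N -> 'C(c, a) = 'C(c, b).
Proof. by move=> ->; apply: binsym. Qed.

Ltac nz R i := have hi0 := ler0n R i; repeat (apply/andP; split); apply: lt0r_neq0; lra.

Lemma Fa (R : realFieldType) i : (@Fp R i)`_i.+1 = i.+1%:R^-1.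
Proof.
rewrite Fp_coef eqxx big1 ?subr0 ?mulr1 //.
by move=> r _; rewrite Fp_coef_hi ?mulr0 // !ltnS.
Qed.

Lemma rest0 (R : realFieldType) (i c : nat) (d : nat) : (i <= d)%N ->
  \sum_(r < i) 'C(c, r)%:R * (@Fp R r)`_d.+1 = 0.
Proof.
move=> h; rewrite big1 // => r _; rewrite Fp_coef_hi ?mulr0 //.
by rewrite !ltnS (leq_trans _ h).
Qed.

Lemma Fb (R : realFieldType) i : (@Fp R i.+1)`_i.+1 = - 2%:R^-1.
Proof.
rewrite Fp_coef big_ord_recr /= rest0 // add0r Fa.
rewrite (binsym' (b := 2)) ?addn2 // binR2.
have -> : (((i.+1 == i.+2) : nat)%:R : R) = 0 by rewrite ltn_eqF.
field; nz R i.
Qed.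

Lemma Fc (R : realFieldType) i : (@Fp R i.+2)`_i.+1 = i.+2%:R / 12%:R.
Proof.
rewrite Fp_coef !big_ord_recr /= rest0 // add0r Fa Fb.
rewrite (binsym' (a := i) (b := 3)) ?addn3 // binR3.
rewrite (binsym' (a := i.+1) (b := 2)) ?addn2 ?addnS // binR2.
have -> : (((i.+1 == i.+3) : nat)%:R : R) = 0 by rewrite ltn_eqF.
field; nz R i.
Qed.

Lemma Fd (R : realFieldType) i : (@Fp R i.+3)`_i.+1 = 0.
Proof.
rewrite Fp_coef !big_ord_recr /= rest0 // add0r Fa Fb Fc.
rewrite (binsym' (a := i) (b := 4)) ?addn4 // binR4.
rewrite (binsym' (a := i.+1) (b := 3)) ?addn3 ?addnS // binR3.
rewrite (binsym' (a := i.+2) (b := 2)) ?addn2 ?addnS // binR2.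
have -> : (((i.+1 == i.+4) : nat)%:R : R) = 0 by rewrite ltn_eqF //; lia.
field; nz R i.
Qed.

Definition Ppoly {R : realFieldType} (m l : nat) : {poly R} :=
  \sum_(i < m.+1) ('C(m, i)%:R * (2 * l)%:R ^+ i) *: ('X^i + 2%:R *: Fp i).

Definition Ncount (m l k : nat) : nat :=
  ((2 * l * k).+1 ^ m + 2 * \sum_(j < k) (2 * l * j).+1 ^ m)%N.

Lemma Ppoly_val (R : realFieldType) m l k :
  (@Ppoly R m l).[k%:R] = (Ncount m l k)%:R.
Proof.
rewrite /Ppoly /Ncount horner_sum natrD [X in _ + X]natrM natr_sum natrX.
have e : forall x : nat, ((2 * l * x).+1%:R : R) ^+ m =
   \sum_(i < m.+1) 'C(m, i)%:R * (2 * l)%:R ^+ i * x%:R ^+ i.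
  move=> x; rewrite -[(2 * l * x).+1]addn1 natrD exprD1n; apply: eq_bigr => i _.
  by rewrite natrM exprMn -mulr_natl mulrA.
rewrite e.
under eq_bigr do rewrite natrX e.
rewrite exchange_big mulr_sumr -big_split /=; apply: eq_bigr => i _.
rewrite hornerZ hornerD hornerXn hornerZ Fp_val mulrDr; congr (_ + _).
by rewrite mulrCA mulr_sumr.
Qed.

Lemma Ppoly_coef (R : realFieldType) m l d :
  (@Ppoly R m l)`_d = \sum_(i < m.+1) 'C(m, i)%:R * (2 * l)%:R ^+ i *
      (((i : nat) == d)%:R + 2%:R * (Fp i)`_d).
Proof.
rewrite /Ppoly coef_sum; apply: eq_bigr => i _.
by rewrite coefZ coefD coefXn coefZ eq_sym.
Qed.

Lemma Prest0 (R : realFieldType) (m' m l d : nat) : (m' <= d)%N ->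
  \sum_(i < m') 'C(m, i)%:R * ((2 * l)%:R : R) ^+ i *
      (((i : nat) == d.+1)%:R + 2%:R * (@Fp R i)`_d.+1) = 0.
Proof.
move=> h; apply: big1 => i _.
rewrite Fp_coef_hi; last by rewrite !ltnS (leq_trans _ h).
have -> : ((((i : nat) == d.+1) : nat)%:R : R) = 0.
  by rewrite ltn_eqF // ltnS (leq_trans _ h) // ltnW.
by rewrite mulr0 addr0 mulr0.
Qed.

Lemma coef1 (R : realFieldType) m l : (1 <= l)%N ->
  ((2 * l)%:R : R) ^+ m.+2 / 3%:R <= (@Ppoly R m.+2 l)`_m.+1.
Proof.
move=> hl.
rewrite Ppoly_coef !big_ord_recr /= Prest0 // add0r Fa Fb Fc eqxx.
have -> : (((m == m.+1) : nat)%:R : R) = 0 by rewrite ltn_eqF.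
have -> : (((m.+2 == m.+1) : nat)%:R : R) = 0 by rewrite gtn_eqF.
rewrite binn mul1r.
set L := ((2 * l)%:R : R).
have hL : 0 <= L by rewrite /L ler0n.
have hm := ler0n R m.
have h1 : 0 <= 'C(m.+2, m)%:R * L ^+ m * (0 + 2%:R * m.+1%:R^-1).
  rewrite add0r; apply: mulr_ge0; first by apply: mulr_ge0; rewrite ?ler0n ?exprn_ge0.
  by apply: mulr_ge0; rewrite ?ler0n ?invr_ge0 ?ler0n.
have -> : 'C(m.+2, m.+1)%:R * L ^+ m.+1 * (1 + 2%:R * - 2%:R^-1) = 0.
  by rewrite mulrN divff ?pnatr_eq0 // subrr mulr0.
rewrite addr0.
have h2 : L ^+ m.+2 / 3%:R <= L ^+ m.+2 * (0 + 2%:R * (m.+2%:R / 12%:R)).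
  rewrite add0r; apply: ler_wpM2l; first by rewrite exprn_ge0.
  have -> : (m.+2%:R : R) = m%:R + 2 by rewrite -addn2 natrD.
  lra.
by apply: (le_trans h2); rewrite -[X in X <= _]add0r lerD2r.
Qed.

Lemma coef2 (R : realFieldType) m l : (1 <= l)%N ->
  ((2 * l)%:R : R) ^+ m.+2 / 3%:R <= (@Ppoly R m.+3 l)`_m.+1.
Proof.
move=> hl.
rewrite Ppoly_coef !big_ord_recr /= Prest0 // add0r Fa Fb Fc Fd eqxx.
have -> : (((m == m.+1) : nat)%:R : R) = 0 by rewrite ltn_eqF.
have -> : (((m.+2 == m.+1) : nat)%:R : R) = 0 by rewrite gtn_eqF.
have -> : (((m.+3 == m.+1) : nat)%:R : R) = 0 by rewrite gtn_eqF.
rewrite binSn.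
set L := ((2 * l)%:R : R).
have hL : 0 <= L by rewrite /L ler0n.
have hm := ler0n R m.
have h1 : 0 <= 'C(m.+3, m)%:R * L ^+ m * (0 + 2%:R * m.+1%:R^-1).
  rewrite add0r; apply: mulr_ge0; first by apply: mulr_ge0; rewrite ?ler0n ?exprn_ge0.
  by apply: mulr_ge0; rewrite ?ler0n ?invr_ge0 ?ler0n.
have -> : 'C(m.+3, m.+1)%:R * L ^+ m.+1 * (1 + 2%:R * - 2%:R^-1) = 0.
  by rewrite mulrN divff ?pnatr_eq0 // subrr mulr0.
have -> : 'C(m.+3, m.+3)%:R * L ^+ m.+3 * (0 + 2%:R * 0) = 0.
  by rewrite mulr0 addr0 mulr0.
rewrite addr0 addr0.
have h3 : 3%:R^-1 <= m.+3%:R * (0 + 2%:R * (m.+2%:R / 12%:R)) :> R.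
  have -> : (m.+2%:R : R) = m%:R + 2 by rewrite -addn2 natrD.
  have -> : (m.+3%:R : R) = m%:R + 3 by rewrite -addn3 natrD.
  rewrite add0r.
  have hmm : 0 <= m%:R * m%:R :> R by apply: mulr_ge0.
  nra.
have h2 := ler_wpM2l (exprn_ge0 m.+2 hL) h3.
have e : L ^+ m.+2 * (m.+3%:R * (0 + 2%:R * (m.+2%:R / 12%:R))) =
   m.+3%:R * L ^+ m.+2 * (0 + 2%:R * (m.+2%:R / 12%:R)) by ring.
rewrite e in h2.
by apply: (le_trans h2); rewrite -[X in X <= _]add0r lerD2r.
Qed.

Local Close Scope ring_scope.

Definition dB (B a : nat) : nat := absz (a%:Z - B%:Z)%R.

Lemma sum_sym (B : nat) (g : nat -> nat) :
  \sum_(a < (2 * B).+1) g (dB B a) = g 0 + 2 * \sum_(i < B) g i.+1.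
Proof.
rewrite -(big_mkord xpredT (fun a => g (dB B a))).
rewrite (big_cat_nat _ (n := B)) ?leq0n //; last by lia.
rewrite (big_cat_nat _ (m := B) (n := B.+1)) //; last by lia.
rewrite big_nat1.
have -> : dB B B = 0 by rewrite /dB subrr.
rewrite big_nat_rev /= add0n.
have e1 : \sum_(0 <= i < B) g (dB B (B - i.+1)) = \sum_(i < B) g i.+1.
  rewrite big_mkord; apply: eq_bigr => i _; congr g; rewrite /dB.
  have := ltn_ord i; lia.
have e2 : \sum_(B.+1 <= i < (2 * B).+1) g (dB B i) = \sum_(i < B) g i.+1.
  rewrite -(add0n B.+1) big_addn.
  have -> : ((2 * B).+1 - B.+1 = B)%N by lia.
  rewrite big_mkord; apply: eq_bigr => i _; congr g; rewrite /dB; lia.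
by rewrite e1 e2 addnCA mul2n -addnn.
Qed.

Lemma sum_lt (B L : nat) : (L <= B)%N -> \sum_(i < B) (if (i.+1 <= L)%N then 1 else 0)%N = L.
Proof.
move=> hLB.
rewrite -(big_mkord xpredT (fun i => if (i.+1 <= L)%N then 1 else 0)%N).
rewrite (big_cat_nat _ (n := L)) ?leq0n //=.
rewrite [X in X + _](eq_big_nat _ _ (F2 := fun=> 1%N)); last first.
  by move=> i /andP [_ h]; rewrite h.
rewrite sum_nat_const_nat subn0 muln1 big1_seq ?addn0 //.
move=> i /andP [_]; rewrite mem_index_iota => /andP [h _].
by rewrite ltnNge h.
Qed.

Lemma card_interval (B L : nat) : (L <= B)%N ->
  #|[pred b : 'I_(2 * B).+1 | (dB B b <= L)%N]| = (2 * L).+1.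
Proof.
move=> hLB.
rewrite -sum1_card big_mkcond /=.
rewrite (sum_sym B (fun t => if (t <= L)%N then 1 else 0)%N) /=.
by rewrite sum_lt // add1n.
Qed.

Definition Pk n (jl : 'I_n) l k (x : {ffun 'I_n -> 'I_(2 * (l * k)).+1}) : bool :=
  (dB (l * k) (x jl) <= k)%N &&
  [forall j, (j != jl) ==> (dB (l * k) (x j) <= l * (k - dB (l * k) (x jl)))%N].

Lemma sum_tail (l k m : nat) : (0 < l)%N ->
  \sum_(i < l * k) ((i.+1 <= k)%N * (2 * (l * (k - i.+1))).+1 ^ m)%N =
  \sum_(j < k) (2 * l * j).+1 ^ m.
Proof.
move=> hl.
rewrite -(big_mkord xpredT (fun i => ((i.+1 <= k)%N * (2 * (l * (k - i.+1))).+1 ^ m)%N)).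
rewrite (big_cat_nat _ (n := k)) ?leq0n //=; last by rewrite leq_pmull.
rewrite [X in _ + X]big1_seq ?addn0; last first.
  move=> i /andP [_]; rewrite mem_index_iota => /andP [h _].
  by rewrite ltnNge h.
rewrite big_nat_rev /= add0n -(big_mkord xpredT (fun j => (2 * l * j).+1 ^ m)%N).
apply: eq_big_nat => i /andP [_ hi].
have -> : ((k - i.+1).+1 <= k)%N = true by lia.
by rewrite mul1n mulnA; congr ((2 * l * _).+1 ^ m); lia.
Qed.

Lemma card_Pk n (jl : 'I_n) l k : (0 < l)%N ->
  #|[pred x | @Pk n jl l k x]| = Ncount n.-1 l k.
Proof.
move=> hl.
set B := (l * k)%N.
pose F (a : 'I_(2 * B).+1) (j : 'I_n) : pred 'I_(2 * B).+1 :=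
  if j == jl then [pred b : 'I_(2 * B).+1 | (b == a) && (dB B a <= k)%N]
  else [pred b : 'I_(2 * B).+1 | (dB B b <= l * (k - dB B a))%N].
have hfam : forall a, #|[pred x | @Pk n jl l k x && (x jl == a)]| =
    ((dB B a <= k)%N * (2 * (l * (k - dB B a))).+1 ^ n.-1)%N.
  move=> a.
  have -> : #|[pred x | @Pk n jl l k x && (x jl == a)]| = #|family (F a)|.
    apply: eq_card => x; rewrite !inE.
    apply/andP/familyP.
      move=> [/andP [h1 /forallP h2] /eqP xa] j; rewrite /F.
      case: eqP => [->|/eqP jn]; first by rewrite inE xa eqxx -xa h1.
      by rewrite inE -xa; have := h2 j; rewrite jn.
    move=> h; have := h jl; rewrite /F eqxx inE => /andP [/eqP xa hk].
    split; last by rewrite xa.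
    rewrite /Pk xa hk /=; apply/forallP => j; apply/implyP => jn.
    by have := h j; rewrite /F (negbTE jn) inE.
  rewrite card_family foldrE big_image /= (bigD1 jl) //=.
  have -> : #|F a jl| = (dB B a <= k)%N.
    rewrite /F eqxx; case: (dB B a <= k)%N.
      rewrite (@eq_card _ _ (pred1 a)); first by rewrite card1.
      by move=> b; rewrite !inE.
    rewrite (@eq_card _ _ pred0); first by rewrite card0.
    by move=> b; rewrite !inE andbF.
  congr (_ * _)%N.
  rewrite (eq_bigr (fun _ => (2 * (l * (k - dB B a))).+1)%N).
    by rewrite prod_nat_const cardC1 card_ord.
  move=> j jn; rewrite /F (negbTE jn).
  by apply: card_interval; rewrite /B leq_mul2l leq_subr orbT.
rewrite -sum1_card (partition_big (fun x : {ffun 'I_n -> 'I_(2 * B).+1} => x jl) xpredT) //=.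
rewrite (eq_bigr (fun a : 'I_(2 * B).+1 => ((dB B a <= k)%N * (2 * (l * (k - dB B a))).+1 ^ n.-1)%N)); last first.
  by move=> a _; rewrite sum1_card -hfam.
rewrite (sum_sym B (fun t => ((t <= k)%N * (2 * (l * (k - t))).+1 ^ n.-1)%N)).
by rewrite /B sum_tail // /Ncount leq0n mul1n subn0 mulnA.
Qed.

Local Open Scope ring_scope.
Local Open Scope classical_set_scope.

Lemma gauge_gen (R : realType) n l (hl : (0 < l)%N) (jl j : 'I_n)
  (hjl : val jl = n.-1) (hj : val j != n.-1) (v : 'rV[R]_n) :
  (cube_times0 n l `|` [set e_last n; - e_last n]) v ->
  `|v 0 jl| + `|v 0 j| / l%:R <= 1.
Proof.
have hl' : (0 : R) < l%:R by rewrite ltr0n.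
case=> [hc|[->|->]].
- have := hc jl; rewrite hjl eqxx => ->.
  have := hc j; rewrite (negbTE hj) => hj'.
  by rewrite normr0 add0r ler_pdivrMr // mul1r.
- by rewrite /e_last !mxE hjl eqxx (negbTE hj) normr1 normr0 mul0r addr0.
- by rewrite /e_last !mxE hjl eqxx (negbTE hj) normrN normr1 oppr0 normr0 mul0r addr0.
Qed.

Lemma gaugeQ (R : realType) n l (hl : (0 < l)%N) (jl j : 'I_n)
  (hjl : val jl = n.-1) (hj : val j != n.-1) (y : 'rV[R]_n) :
  Qnl n l y -> `|y 0 jl| + `|y 0 j| / l%:R <= 1.
Proof.
case=> m [w [v [w0 [w1 [vS ->]]]]].
rewrite !summxE.
have hl' : (0 : R) < l%:R by rewrite ltr0n.
apply: (@le_trans _ _ (\sum_(i < m) w i * (`|v i 0 jl| + `|v i 0 j| / l%:R))).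
  rewrite [X in _ <= X](eq_bigr _ (fun i _ => mulrDr _ _ _)) big_split /=.
  apply: lerD.
    apply: (le_trans (ler_norm_sum _ _ _)); apply: ler_sum => i _.
    by rewrite mxE normrM ger0_norm.
  rewrite ler_pdivrMr // mulr_suml.
  apply: (le_trans (ler_norm_sum _ _ _)); apply: ler_sum => i _.
  by rewrite mxE normrM ger0_norm // mulrA divfK ?lt0r_neq0.
rewrite -[X in _ <= X]w1; apply: ler_sum => i _.
have h := gauge_gen hl hjl hj (vS i).
rewrite -subr_ge0 -[X in X - _]mulr1 -mulrBr; apply: mulr_ge0; [exact: w0 | by rewrite subr_ge0].
Qed.

Lemma e_lastE (R : realType) n (jl j : 'I_n) (hjl : val jl = n.-1) :
  (e_last n : 'rV[R]_n) 0 j = (j == jl)%:R.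
Proof.
rewrite /e_last mxE.
have -> : (val j == n.-1) = (j == jl).
  apply/idP/idP => [/eqP h|/eqP ->]; last by rewrite hjl.
  by apply/eqP/val_inj; rewrite /= h hjl.
by case: (j == jl).
Qed.

Lemma neq_last n (jl j : 'I_n) (hjl : val jl = n.-1) : j != jl -> (val j == n.-1) = false.
Proof. by move=> jn; apply/negbTE; rewrite -hjl (inj_eq val_inj). Qed.

Lemma Qmem (R : realType) n l (jl : 'I_n) (hjl : val jl = n.-1) (y : 'rV[R]_n) :
  `|y 0 jl| <= 1 ->
  (forall j : 'I_n, j != jl -> `|y 0 j| <= l%:R * (1 - `|y 0 jl|)) ->
  Qnl n l y.
Proof.
move=> ha hj.
set h := y 0 jl; set a := `|h|; set b := 1 - a.
have hb : 0 <= b by rewrite /b subr_ge0.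
set e : 'rV[R]_n := e_last n.
set v2 := if 0 <= h then e else - e.
set z := y - h *: e.
have zb : b *: (b^-1 *: z) = z.
  have [b0|bn0] := eqVneq b 0; last by rewrite scalerA divff // scale1r.
  rewrite b0 invr0 scale0r; symmetry; apply/rowP => j; rewrite !mxE.
  have [->|jn] := eqVneq j jl.
    by rewrite hjl eqxx mulr1 subrr.
  rewrite (neq_last hjl jn) mulr0 subr0.
  by apply/eqP; rewrite -normr_le0 -(mulr0 (l%:R)) -b0 hj.
have av2 : a *: v2 = h *: e.
  rewrite /v2 /a; case: ifP => h0; first by rewrite ger0_norm.
  by rewrite ltr0_norm ?scaleNr ?scalerN ?opprK // ltNge h0.
exists 2%N, (fun i => if i == ord0 then b else a),
  (fun i => if i == ord0 then b^-1 *: z else v2).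
split; first by move=> i; case: ifP => _; rewrite /a ?normr_ge0.
split; first by rewrite big_ord_recl big_ord1 /= /b subrK.
split.
  move=> i; case: ifP => _; last by right; rewrite /v2; case: ifP => _; [left|right].
  left => j; rewrite !mxE.
  case: ifP => hjn.
    have -> : j = jl by apply/val_inj; rewrite /= (eqP hjn) hjl.
    by rewrite hjl eqxx mulr1 subrr mulr0.
  rewrite hjn mulr0 subr0 normrM.
  have [b0|bn0] := eqVneq b 0; first by rewrite b0 invr0 normr0 mul0r ler0n.
  have bp : 0 < b by rewrite lt_def bn0 hb.
  have jn : j != jl by apply/negP => /eqP jj; rewrite jj hjl eqxx in hjn.
  by rewrite normfV (ger0_norm hb) mulrC ler_pdivrMr // hj.
rewrite big_ord_recl big_ord1 /= zb av2 /z subrK.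
done.
Qed.

Lemma dil_char (R : realType) n l (hl : (0 < l)%N) (jl j0 : 'I_n)
  (hjl : val jl = n.-1) (hj0 : val j0 != n.-1) (k : nat) (x : 'rV[R]_n) :
  dilate k%:R (Qnl n l) x <->
  (`|x 0 jl| <= k%:R /\ forall j, j != jl -> `|x 0 j| <= l%:R * (k%:R - `|x 0 jl|)).
Proof.
have hl' : (0 : R) < l%:R by rewrite ltr0n.
have hk : (0 : R) <= k%:R by rewrite ler0n.
split.
  case=> y Qy <-; rewrite !mxE normrM (ger0_norm hk).
  have g := gaugeQ hl hjl _ Qy.
  split.
    have := g j0 hj0.
    have : 0 <= `|y 0 j0| / l%:R by rewrite divr_ge0 // ltW.
    move=> h1 h2; rewrite -[X in _ <= X]mulr1; apply: ler_wpM2l => //; lra.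
  move=> j jn; rewrite mxE normrM (ger0_norm hk).
  have := g j (negbT (neq_last hjl jn)).
  move=> h.
  have h' : `|y 0 j| <= l%:R * (1 - `|y 0 jl|) by rewrite mulrC -ler_pdivrMr //; lra.
  have -> : l%:R * (k%:R - k%:R * `|y 0 jl|) = k%:R * (l%:R * (1 - `|y 0 jl|)) by ring.
  by apply: ler_wpM2l.
move=> [h1 h2].
have [k0|kp] := eqVneq k 0%N.
  have x0 : x = 0.
    apply/rowP => j; rewrite mxE; apply/eqP; rewrite -normr_le0.
    have [->|jn] := eqVneq j jl; first by move: h1; rewrite k0.
    have := h2 j jn; rewrite k0 /=. move: h1; rewrite k0 => h1. have -> : `|x 0 jl| = 0 by apply/eqP; rewrite eq_le h1 normr_ge0. by rewrite subr0 mulr0.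
  exists 0; last by rewrite x0 scaler0.
  apply: (Qmem hjl); first by rewrite mxE normr0 ler01.
  by move=> j _; rewrite !mxE !normr0 subr0 mulr1 ler0n.
have kpos : (0 : R) < k%:R by rewrite ltr0n lt0n.
exists (k%:R^-1 *: x); last by rewrite scalerA divff ?scale1r // lt0r_neq0.
apply: (Qmem hjl).
  by rewrite mxE normrM normfV (ger0_norm hk) mulrC ler_pdivrMr // mul1r.
move=> j jn; rewrite !mxE !normrM normfV (ger0_norm hk).
rewrite mulrC ler_pdivrMr // (le_trans (h2 j jn)) //.
have kn0 : (k%:R : R) != 0 by exact: lt0r_neq0.
by rewrite le_eqVlt; apply/orP; left; apply/eqP; field.
Qed.

Lemma vecR_norm (R : realType) n (z : 'rV[int]_n) j :
  `|(vecR z : 'rV[R]_n) 0 j| = (absz (z 0%R j))%:R.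
Proof. by rewrite /vecR mxE -intr_norm -natr_absz. Qed.

Lemma int_char (R : realType) n l (hl : (0 < l)%N) (jl j0 : 'I_n)
  (hjl : val jl = n.-1) (hj0 : val j0 != n.-1) (k : nat) (z : 'rV[int]_n) :
  dilate k%:R (Qnl n l) (vecR z : 'rV[R]_n) <->
  ((absz (z 0%R jl) <= k)%N /\ forall j, j != jl -> (absz (z 0%R j) <= l * (k - absz (z 0%R jl)))%N).
Proof.
rewrite (dil_char hl hjl hj0) !vecR_norm ler_nat.
split=> [[h1 h2]|[h1 h2]]; split=> // j jn.
  by have := h2 j jn; rewrite vecR_norm -natrB // -natrM ler_nat.
by rewrite vecR_norm -natrB // -natrM ler_nat h2.
Qed.

Lemma lattice_Q (R : realType) n l (hl : (0 < l)%N) (jl j0 : 'I_n)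
  (hjl : val jl = n.-1) (hj0 : val j0 != n.-1) (k : nat) :
  lattice_count (dilate k%:R (Qnl n l) : set 'rV[R]_n) (Ncount n.-1 l k).
Proof.
set B := (l * k)%N.
pose f (x : {ffun 'I_n -> 'I_(2 * B).+1}) : 'rV[int]_n :=
  \row_j (((x j : nat)%:Z) - B%:Z).
have finj : injective f.
  move=> x y /rowP e; apply/ffunP => j; apply/val_inj.
  by have := e j; rewrite !mxE => /eqP; rewrite -subr_eq0 opprB addrA subrK subr_eq0 => /eqP [].
have fd : forall x j, absz (f x 0 j) = dB B (x j) by move=> x j; rewrite mxE.
exists (map f (enum [pred x | Pk jl x])).
split; first by rewrite map_inj_uniq // enum_uniq.
split; last by rewrite size_map -cardE card_Pk.
move=> z; rewrite (int_char R hl hjl hj0); split.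
  move/mapP => [x]; rewrite mem_enum inE => /andP [h1 /forallP h2] ->.
  rewrite !fd; split => // j jn.
  by have := h2 j; rewrite jn fd.
move=> [h1 h2].
have hzB : forall j, (absz (z 0%R j) <= B)%N.
  move=> j; have [->|jn] := eqVneq j jl.
    by apply: (leq_trans h1); rewrite /B leq_pmull.
  by apply: (leq_trans (h2 j jn)); rewrite /B leq_mul2l leq_subr orbT.
pose x0 : {ffun 'I_n -> 'I_(2 * B).+1} := [ffun j => inord (absz (z 0%R j + B%:Z))].
have x0E : forall j, (x0 j : nat) = absz (z 0%R j + B%:Z).
  move=> j; rewrite ffunE inordK //; have := hzB j; lia.
have dx0 : forall j, dB B (x0 j) = absz (z 0%R j).
  move=> j; rewrite /dB x0E; have := hzB j; lia.
have -> : z = f x0.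
  apply/rowP => j; rewrite mxE x0E; have := hzB j; lia.
apply/mapP; exists x0 => //; rewrite mem_enum inE /Pk !dx0 h1 /=.
apply/forallP => j; apply/implyP => jn; rewrite !dx0; exact: h2.
Qed.


Lemma int_lt1 (R : realType) (z : int) : `|(z%:~R : R)| < 1 -> z = 0.
Proof.
rewrite -intr_norm -natr_absz (_ : 1 = 1%:R) // ltr_nat ltnS leqn0 absz_eq0.
by move/eqP.
Qed.

Lemma DP_zero (R : realType) n l (hl : (0 < l)%N) (jl j0 : 'I_n)
  (hjl : val jl = n.-1) (hj0 : val j0 != n.-1) (t : R) (z : 'rV[int]_n) :
  0 < t -> t * 2 * l%:R < 1 ->
  dilate t (diffbody (Qnl n l)) (vecR z : 'rV[R]_n) -> z = 0.
Proof.
move=> tp tl [u [x [y [Qx [Qy ->]]]]] e.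
have hl' : (0 : R) < l%:R by rewrite ltr0n.
have hl1 : (1 : R) <= l%:R by rewrite (_ : 1 = 1%:R) // ler_nat.
have key : forall j, val j != n.-1 ->
    `|(vecR z : 'rV[R]_n) 0 jl| + `|(vecR z : 'rV[R]_n) 0 j| / l%:R < 1 / l%:R.
  move=> j hj.
  have gx := gaugeQ hl hjl hj Qx; have gy := gaugeQ hl hjl hj Qy.
  rewrite -e !mxE !normrM (gtr0_norm tp).
  have n1 := ler_normB (x 0 jl) (y 0 jl).
  have n2 := ler_normB (x 0 j) (y 0 j).
  have : `|x 0 j - y 0 j| / l%:R <= `|x 0 j| / l%:R + `|y 0 j| / l%:R.
    by rewrite -mulrDl ler_wpM2r // invr_ge0 ltW.
  move=> n3.
  have h4 : `|x 0 jl - y 0 jl| + `|x 0 j - y 0 j| / l%:R <= 2.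
    lra.
  have h5 : t * `|x 0 jl - y 0 jl| + t * `|x 0 j - y 0 j| / l%:R <= t * 2.
    by rewrite -mulrA -mulrDr ler_wpM2l // ltW.
  apply: (le_lt_trans h5).
  by rewrite ltr_pdivlMr // mul1r.
apply/rowP => j; rewrite mxE.
have k0 := key j0 hj0.
have hjl0 : `|(vecR z : 'rV[R]_n) 0 jl| < 1.
  have : 0 <= `|(vecR z : 'rV[R]_n) 0 j0| / l%:R by rewrite divr_ge0 // ltW.
  have : 1 / l%:R <= (1 : R) by rewrite ler_pdivrMr // mul1r.
  lra.
have [->|jn] := eqVneq j jl.
  by apply: (@int_lt1 R); move: hjl0; rewrite /vecR mxE.
have := key j (negbT (neq_last hjl jn)).
have : 0 <= `|(vecR z : 'rV[R]_n) 0 jl| by [].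
move=> h0 h; apply: (@int_lt1 R).
have : `|(vecR z : 'rV[R]_n) 0 j| / l%:R < 1 / l%:R by lra.
by rewrite ltr_pM2r ?invr_gt0 // /vecR mxE.
Qed.

Lemma succ_min_bound (R : realType) n l (hl : (0 < l)%N) (jl j0 : 'I_n)
  (hjl : val jl = n.-1) (hj0 : val j0 != n.-1) (i : nat) : (0 < i)%N ->
  0 <= 1 / succ_min (diffbody (Qnl n l) : set 'rV[R]_n) i <= 2 * l%:R.
Proof.
move=> hi.
have hl' : (0 : R) < l%:R by rewrite ltr0n.
set S := [set t : R | 0 < t /\ lattice_affdim_ge (dilate t (diffbody (Qnl n l))) i].
have lb : forall t, S t -> 1 / (2 * l%:R) <= t.
  move=> t [tp [zs [zin rf]]].
  rewrite leNgt; apply/negP => tl.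
  have zs0 : forall j, zs j = 0.
    move=> j; apply: (DP_zero hl hjl hj0 tp _ (zin j)).
    by move: tl; rewrite ltr_pdivlMr ?mulr_gt0 // mulrA.
  move: rf; rewrite /row_free.
  have -> : (\matrix_(j < i) (vecR (zs (lift ord0 j)) - vecR (zs ord0)) : 'M[R]_(i, n)) = 0.
    by apply/matrixP => a b; rewrite !mxE !zs0 /vecR !mxE subrr.
  by rewrite mxrank0; move/eqP => e0; rewrite -e0 in hi.
rewrite /succ_min -/S.
have [ne|em] := pselect (exists t, S t).
  have h := lb_le_inf ne lb.
  have hp : 0 < 1 / (2 * l%:R) :> R by rewrite mul1r invr_gt0 mulr_gt0.
  have ip : 0 < inf S by apply: lt_le_trans h.
  apply/andP; split; first by rewrite divr_ge0 // ltW.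
  rewrite mul1r -[X in _ <= X]invrK lef_pV2 ?posrE ?invr_gt0 ?mulr_gt0 //.
  by rewrite -[X in X <= _]mul1r.
have -> : S = set0.
  by apply/seteqP; split => t // St; exfalso; apply: em; exists t.
by rewrite inf0 invr0 mulr0 lexx /= mulr_ge0 // ltW.
Qed.

Lemma esym_bound (R : realType) n (x : 'I_n -> R) (c : R) i : 0 <= c ->
  (forall j, 0 <= x j <= c) -> 0 <= Defs.esym x i <= #|{set 'I_n}|%:R * c ^+ i.
Proof.
move=> c0 hx; rewrite /Defs.esym; apply/andP; split.
  apply: sumr_ge0 => I _; apply: prodr_ge0 => j _; by case/andP: (hx j).
apply: (@le_trans _ _ (\sum_(I : {set 'I_n}) c ^+ i)); last by rewrite sumr_const mulr_natl.
rewrite [X in _ <= X](bigID (fun I : {set 'I_n} => #|I| == i)) /= -[X in X <= _]addr0.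
apply: lerD; last by apply: sumr_ge0 => I _; rewrite exprn_ge0.
apply: ler_sum => I /eqP <-.
rewrite -prodr_const; apply: ler_prod => j _; exact: hx.
Qed.

Lemma final_ineq (R : realType) (c K s A L : R) (i : nat) :
  0 <= K -> 0 <= s -> s <= K * L ^+ i -> L ^+ i.+1 / 3%:R <= A -> 0 < L ->
  c * K < L / 3%:R -> c * s < A.
Proof.
move=> hK hs0 hs hA hL hc.
have P0 : 0 < L ^+ i by rewrite exprn_gt0.
move: hs hA; rewrite exprS; set P := L ^+ i => hs hA.
have [c0|c0] := lerP c 0.
  have : c * s <= 0 by rewrite mulr_le0_ge0.
  have : 0 < L * P / 3%:R by rewrite divr_gt0 ?mulr_gt0.
  lra.
have h1 : c * s <= c * (K * P) by rewrite ler_pM2l.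
have h2 : c * K * P < L / 3%:R * P by rewrite ltr_pM2r.
have e : L / 3%:R * P = L * P / 3%:R by rewrite mulrAC.
rewrite mulrA in h1.
lra.
Qed.

Lemma main_gen (R : realType) n (hn : (3 <= n)%N) (d : nat)
  (hcoef : forall l, (1 <= l)%N -> ((2 * l)%:R : R) ^+ d.+1 / 3%:R <= (@Ppoly R n.-1 l)`_d)
  (c : R) : exists (l : nat) (p : {poly R}),
      is_ehrhart_poly (Qnl n l) p /\ c * sigma_poly (Qnl n l) d < p`_d.
Proof.
case: n hn hcoef => [|n'] // hn hcoef.
set jl : 'I_n'.+1 := ord_max.
have hjl : val jl = n'.+1.-1 by [].
set j0 : 'I_n'.+1 := ord0.
have hj0 : val j0 != n'.+1.-1 by rewrite /= eq_sym -lt0n; case: n' hn {hcoef jl hjl j0}.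
set K : R := #|{set 'I_n'.+1}|%:R.
set l := (Num.Def.trunc `|c * K * 3%:R|).+1.
have hl : (0 < l)%N by [].
exists l, (Ppoly n'.+1.-1 l); split.
  move=> k; exists (Ncount n'.+1.-1 l k); split; first exact: (lattice_Q R hl hjl hj0 k).
  exact: Ppoly_val.
have hL : ((2 * l)%:R : R) = 2 * l%:R by rewrite natrM.
have hs : 0 <= sigma_poly (Qnl n'.+1 l : set 'rV[R]_n'.+1) d <= K * ((2 * l)%:R : R) ^+ d.
  rewrite /sigma_poly hL /K; apply: esym_bound; first by rewrite mulr_ge0 ?ler0n.
  by move=> j; apply: (succ_min_bound R hl hjl hj0).
apply: (final_ineq (K := K) (L := (2 * l)%:R) (i := d)).
- by rewrite /K ler0n.
- by case/andP: hs.
- by case/andP: hs.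
- exact: hcoef.
- by rewrite ltr0n muln_gt0.
have t := truncnS_gt `|c * K * 3%:R|.
have nn := ler_norm (c * K * 3%:R).
rewrite hL -/l in t *.
have hl0 : (0 : R) <= l%:R by rewrite ler0n.
lra.
Qed.

Local Close Scope classical_set_scope.

Theorem proposition1p3 (R : realType) (n : nat) (hn : (3 <= n)%N) :
  (forall c : R, exists (l : nat) (p : {poly R}),
      is_ehrhart_poly (Qnl n l) p /\
      c * sigma_poly (Qnl n l) (n - 2)%N < p`_(n - 2)) /\
  ((4 <= n)%N ->
   forall c : R, exists (l : nat) (p : {poly R}),
      is_ehrhart_poly (Qnl n l) p /\
      c * sigma_poly (Qnl n l) (n - 3)%N < p`_(n - 3)).
Proof.
split.
  move=> c; apply: main_gen => // l hl.
  case: n hn => [|[|[|n']]] // _.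
  have -> : (n'.+3 - 2 = n'.+1)%N by rewrite subSS subSS subn0.
  exact: coef1.
move=> h4 c; apply: main_gen => // l hl.
case: n hn h4 => [|[|[|[|n']]]] // _ _.
have -> : (n'.+4 - 3 = n'.+1)%N by rewrite !subSS subn0.
exact: coef2.
Qed.
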